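(* The containment relation $\ge$ is a partial order on the set $[\mathrm{Cay}]$ of equivalence classes of Cayley permutations.
   Context: A Cayley permutation is a word of positive integers in which every integer from $1$ to its maximum occurs; $\mathrm{Cay}$ is the set of all of them. Containment $y\le x$: indices $i_1<\dots<i_k$ ($k$ the length of $y$) with $x(i_s)<x(i_t)\iff y(s)<y(t)$ and $x(i_s)=x(i_t)\iff y(s)=y(t)$. For $x$ of length $n$, $\gamma(x)$ is the permutation obtained by sorting the pairs $(x(i),i)$ increasingly by first coordinate, ties by decreasing second coordinate, and reading the second coordinates. $x\sim y$ iff $\gamma(x)=\gamma(y)$; $[x]$ is the class of $x$ and $[\mathrm{Cay}]$ the set of classes. For classes, $[x]\ge[y]$ iff $x'\ge y'$ for some $x'\in[x]$ and $y'\in[y]$. *)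

(* Defs.v *)
(* Words are seq nat; indices are 0-based (irrelevant for gamma-equality). *)
From mathcomp Require Import all_boot.
Set Implicit Arguments. Unset Strict Implicit. Unset Printing Implicit Defensive.

Definition wmax (x : seq nat) : nat := foldr maxn 0 x.

Definition is_cay (x : seq nat) : Prop :=
  all (fun a => 0 < a) x /\ forall k, 1 <= k <= wmax x -> k \in x.

Definition contains (x y : seq nat) : Prop :=
  exists idx : seq nat,
    [/\ size idx = size y, sorted ltn idx, all (fun i => i < size x) idx &
        forall s t, s < size y -> t < size y ->
          (nth 0 x (nth 0 idx s) < nth 0 x (nth 0 idx t) <-> nth 0 y s < nth 0 y t) /\
          (nth 0 x (nth 0 idx s) = nth 0 x (nth 0 idx t) <-> nth 0 y s = nth 0 y t)].

Definition gamma_rel (p q : nat * nat) : bool :=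
  (p.1 < q.1) || ((p.1 == q.1) && (q.2 <= p.2)).

Definition gamma (x : seq nat) : seq nat :=
  map snd (sort gamma_rel (zip x (iota 0 (size x)))).

Definition cay_equiv (x y : seq nat) : Prop := gamma x = gamma y.

Definition class_ge (x y : seq nat) : Prop :=
  exists x' y', [/\ is_cay x', is_cay y', cay_equiv x' x, cay_equiv y' y & contains x' y'].

(* Main.v *)
Require Import Defs.
From mathcomp Require Import all_boot.
Set Implicit Arguments. Unset Strict Implicit. Unset Printing Implicit Defensive.

Definition R (x : seq nat) : rel nat := fun i j => gamma_rel (nth 0 x i, i) (nth 0 x j, j).

Lemma gammaE x : gamma x = sort (R x) (iota 0 (size x)).
Proof.
rewrite /gamma.
have -> : zip x (iota 0 (size x)) = map (fun i => (nth 0 x i, i)) (iota 0 (size x)).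
  apply: (@eq_from_nth _ (0,0)); first by rewrite size_zip size_map size_iota minnn.
  move=> i; rewrite size_zip size_iota minnn => hi.
  by rewrite nth_zip ?size_iota // (nth_map 0) ?size_iota // nth_iota.
rewrite sort_map -map_comp map_id_in //.
Qed.

Lemma size_gamma x : size (gamma x) = size x.
Proof. by rewrite gammaE size_sort size_iota. Qed.

Lemma R_total x : total (R x).
Proof.
move=> i j; rewrite /R /gamma_rel /=.
case: (ltngtP (nth 0 x i) (nth 0 x j)) => //= _; exact: leq_total.
Qed.

Lemma R_trans x : transitive (R x).
Proof.
move=> j i k; rewrite /R /gamma_rel /=.
case/orP=> [h1|/andP[/eqP e1 h1]]; case/orP=> [h2|/andP[/eqP e2 h2]].
- by rewrite (ltn_trans h1 h2).
- by rewrite -e2 h1.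
- by rewrite e1 h2.
- by rewrite e1 e2 eqxx (leq_trans h2 h1) orbT.
Qed.

Lemma R_anti x : antisymmetric (R x).
Proof.
move=> i j; rewrite /R /gamma_rel /=.
case: (ltngtP (nth 0 x i) (nth 0 x j)) => //= _ /andP[h1 h2].
by apply/eqP; rewrite eqn_leq h1 h2.
Qed.

Lemma L3 x y : size x = size y ->
  {in [pred i | i < size x] &, R x =2 R y} -> gamma x = gamma y.
Proof.
move=> hs hR; rewrite !gammaE -hs.
apply: (sorted_eq (@R_trans x) (@R_anti x)).
- exact: sort_sorted (@R_total x) _.
- rewrite (@eq_in_sorted _ [pred i | i < size x] (R x) (R y)) //.
  + exact: sort_sorted (@R_total y) _.
  + by apply/allP=> i; rewrite mem_sort mem_iota.
- by rewrite perm_sort perm_sym perm_sort.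
Qed.

Lemma L2 x y : gamma x = gamma y ->
  forall i j, i < size x -> j < size x -> R x i j = R y i j.
Proof.
move=> hg.
have hs : size x = size y by rewrite -size_gamma hg size_gamma.
have key : forall a b, a < size x -> b < size x -> R x a b -> R y a b.
  move=> a b ha hb hab.
  have [->|neq] := eqVneq a b; first by rewrite /R /gamma_rel /= leqnn eqxx orbT.
  set s := gamma x.
  have sx : sorted (R x) s by rewrite /s gammaE; exact: sort_sorted (@R_total x) _.
  have sy : sorted (R y) s by rewrite /s hg gammaE; exact: sort_sorted (@R_total y) _.
  have ins : forall c, c < size x -> c \in s.
    by move=> c hc; rewrite /s gammaE mem_sort mem_iota.
  have [lt|gt|eq] := ltngtP (index a s) (index b s).
  - exact: (sorted_ltn_index (@R_trans y) sy a b (ins _ ha) (ins _ hb) lt).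
  - have hba := sorted_ltn_index (@R_trans x) sx b a (ins _ hb) (ins _ ha) gt.
    by have := @R_anti x a b; rewrite hab hba => /(_ isT) e; rewrite e eqxx in neq.
  - have : nth 0 s (index a s) = nth 0 s (index b s) by rewrite eq.
    by rewrite !nth_index ?ins // => e; rewrite e eqxx in neq.
move=> i j hi hj; apply/idP/idP; first exact: key.
move=> hy; case hx: (R x i j) => //.
have hji : R x j i by have := R_total x i j; rewrite hx.
have hyji := key _ _ hj hi hji.
have := @R_anti y i j; rewrite hy hyji => /(_ isT) e; subst j.
by rewrite /R /gamma_rel /= leqnn eqxx orbT in hx.
Qed.

Definition cont (x y idx : seq nat) : Prop :=
    [/\ size idx = size y, sorted ltn idx, all (fun i => i < size x) idx &
        forall s t, s < size y -> t < size y ->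
          (nth 0 x (nth 0 idx s) < nth 0 x (nth 0 idx t) <-> nth 0 y s < nth 0 y t) /\
          (nth 0 x (nth 0 idx s) = nth 0 x (nth 0 idx t) <-> nth 0 y s = nth 0 y t)].

Lemma idx_mono idx s t : sorted ltn idx -> s < size idx -> t < size idx ->
  (nth 0 idx s <= nth 0 idx t) = (s <= t).
Proof.
move=> hs hsz htz.
have mono := sorted_ltn_nth ltn_trans 0 hs.
case: (ltngtP s t) => [lt|gt|->]; last by rewrite leqnn.
- by rewrite ltnW // (mono s t hsz htz lt).
- by apply/negbTE; rewrite -ltnNge (mono t s htz hsz gt).
Qed.

Lemma contR x y idx : cont x y idx -> forall s t, s < size y -> t < size y ->
  R y s t = R x (nth 0 idx s) (nth 0 idx t).
Proof.
case=> hsz hsort hall H s t hs ht.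
have [h1 h2] := H s t hs ht.
rewrite /R /gamma_rel /=.
have -> : (nth 0 y s < nth 0 y t) = (nth 0 x (nth 0 idx s) < nth 0 x (nth 0 idx t)).
  by apply/idP/idP => /h1.
have -> : (nth 0 y s == nth 0 y t) = (nth 0 x (nth 0 idx s) == nth 0 x (nth 0 idx t)).
  by apply/eqP/eqP => /h2.
by rewrite idx_mono // hsz.
Qed.

Lemma cont_iso x w w' idx : cont x w idx -> size w' = size w ->
  (forall s t, s < size w -> t < size w ->
     (nth 0 w' s < nth 0 w' t <-> nth 0 w s < nth 0 w t) /\
     (nth 0 w' s = nth 0 w' t <-> nth 0 w s = nth 0 w t)) ->
  cont x w' idx.
Proof.
case=> h1 h2 h3 H hs H'; split => //; first by rewrite hs.
move=> s t; rewrite hs => hs' ht'.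
have [a1 a2] := H s t hs' ht'; have [b1 b2] := H' s t hs' ht'.
split; [exact: (iff_trans a1 (iff_sym b1)) | exact: (iff_trans a2 (iff_sym b2))].
Qed.

Lemma cont_sub x idx : sorted ltn idx -> all (fun i => i < size x) idx ->
  cont x (map (nth 0 x) idx) idx.
Proof.
move=> h1 h2; split => //; first by rewrite size_map.
by move=> s t; rewrite size_map => hs ht; rewrite !(nth_map 0).
Qed.

Lemma wmax_ub s v : v \in s -> v <= wmax s.
Proof.
elim: s => //= a s IH; rewrite inE => /orP [/eqP ->|/IH h]; first exact: leq_maxl.
exact: (leq_trans h (leq_maxr _ _)).
Qed.

Lemma wmax_le s m : (forall v, v \in s -> v <= m) -> wmax s <= m.
Proof.
elim: s => //= a s IH H; rewrite geq_max H ?mem_head //=.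
by apply: IH => v hv; apply: H; rewrite inE hv orbT.
Qed.

Section Compress.
Variable w : seq nat.
Let vals := sort leq (undup w).
Definition compress := map (fun v => (index v vals).+1) w.

Lemma vals_mem v : (v \in vals) = (v \in w).
Proof. by rewrite mem_sort mem_undup. Qed.
Lemma vals_uniq : uniq vals.
Proof. by rewrite sort_uniq undup_uniq. Qed.
Lemma vals_sorted : sorted ltn vals.
Proof. by rewrite ltn_sorted_uniq_leq vals_uniq sort_sorted //; exact: leq_total. Qed.

Lemma vals_lt a b : a \in vals -> b \in vals -> (index a vals < index b vals) = (a < b).
Proof.
move=> ha hb; apply/idP/idP => [h|h].
  exact: (sorted_ltn_index ltn_trans vals_sorted a b ha hb h).
case: (ltngtP (index a vals) (index b vals)) => // [gt|eq].
  by have := sorted_ltn_index ltn_trans vals_sorted b a hb ha gt; rewrite ltnNge ltnW.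
by have := congr1 (nth 0 vals) eq; rewrite !nth_index // => e; rewrite e ltnn in h.
Qed.

Lemma vals_eq a b : a \in vals -> b \in vals -> (index a vals = index b vals) <-> (a = b).
Proof.
move=> ha hb; split => [e|->] //.
by have := congr1 (nth 0 vals) e; rewrite !nth_index.
Qed.

Lemma size_compress : size compress = size w.
Proof. by rewrite size_map. Qed.

Lemma compress_iso s t : s < size w -> t < size w ->
  (nth 0 compress s < nth 0 compress t <-> nth 0 w s < nth 0 w t) /\
  (nth 0 compress s = nth 0 compress t <-> nth 0 w s = nth 0 w t).
Proof.
move=> hs ht; rewrite !(nth_map 0) //.
have hs' : nth 0 w s \in vals by rewrite vals_mem mem_nth.
have ht' : nth 0 w t \in vals by rewrite vals_mem mem_nth.
split; first by rewrite ltnS vals_lt.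
split=> [[e]|->] //; exact: (proj1 (vals_eq hs' ht') e).
Qed.

Lemma compress_cay : is_cay compress.
Proof.
split; first by apply/allP => v /mapP [a _ ->].
move=> k /andP [k1 kle].
have hk : k.-1 < size vals.
  have : wmax compress <= size vals.
    apply: wmax_le => v /mapP [a ha ->]; by rewrite index_mem vals_mem.
  by move=> h; rewrite -ltnS prednK //; exact: leq_trans kle h.
apply/mapP; exists (nth 0 vals k.-1); first by rewrite -vals_mem mem_nth.
by rewrite index_uniq ?vals_uniq // prednK.
Qed.
End Compress.

Lemma comp_sorted (idx1 idx2 : seq nat) : sorted ltn idx1 -> sorted ltn idx2 ->
  all (fun i => i < size idx1) idx2 -> sorted ltn (map (nth 0 idx1) idx2).
Proof.
move=> h1 h2 h3; rewrite sorted_map.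
apply: (@sub_in_sorted _ (fun i => i < size idx1) ltn) => // a b ha hb ab.
exact: (sorted_ltn_nth ltn_trans 0 h1 a b ha hb ab).
Qed.

Lemma idx_full idx n : size idx = n -> sorted ltn idx -> all (fun i => i < n) idx ->
  idx = iota 0 n.
Proof.
move=> hs hso hall.
apply: (irr_sorted_eq ltn_trans ltnn hso (iota_ltn_sorted 0 n)).
have hu : uniq idx by rewrite ltn_sorted_uniq_leq in hso; case/andP: hso.
have sub : {subset idx <= iota 0 n}.
  by move=> v hv; rewrite mem_iota /= (allP hall v hv).
by have [] := uniq_min_size hu sub; rewrite size_iota hs.
Qed.

Lemma size_le x y idx : cont x y idx -> size y <= size x.
Proof.
case=> hs hso hall _; rewrite -hs -(size_iota 0 (size x)).
apply: uniq_leq_size.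
  by rewrite ltn_sorted_uniq_leq in hso; case/andP: hso.
by move=> v hv; rewrite mem_iota /= (allP hall v hv).
Qed.

Lemma equiv_size x y : cay_equiv x y -> size x = size y.
Proof. by move=> h; rewrite -size_gamma h size_gamma. Qed.

Theorem proposition4p15 :
  (forall x, is_cay x -> class_ge x x) /\
  (forall x y, is_cay x -> is_cay y -> class_ge x y -> class_ge y x -> cay_equiv x y) /\
  (forall x y z, is_cay x -> is_cay y -> is_cay z ->
     class_ge x y -> class_ge y z -> class_ge x z).
Proof.
split; [|split].
- move=> x hx; exists x, x; split => //.
  exists (iota 0 (size x)); split; rewrite ?size_iota ?iota_ltn_sorted //.
    by apply/allP => v; rewrite mem_iota.
  by move=> s t hs ht; rewrite !nth_iota.
- move=> x y _ _ [x1 [y1 [_ _ ex1 ey1 [idx1 c1]]]] [y2 [x2 [_ _ ey2 ex2 [idx2 c2]]]].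
  have s1 := size_le c1; have s2 := size_le c2.
  have sx1 := equiv_size ex1; have sy1 := equiv_size ey1.
  have sx2 := equiv_size ex2; have sy2 := equiv_size ey2.
  have hn : size y1 = size x1 by apply/eqP; rewrite eqn_leq s1 sx1 -sx2 (leq_trans s2) // sy2 -sy1.
  have hidx : idx1 = iota 0 (size x1).
    case: (c1) => h1 h2 h3 _; apply: idx_full => //; first by rewrite h1.
  apply: L3; first by rewrite -sx1 -sy1.
  move=> i j hi hj; rewrite /= in hi hj.
  rewrite -(L2 ex1) ?sx1 // -(L2 ey1) -?sy1 ?hn ?sx1 //.
  by rewrite (contR c1) ?hn ?sx1 // hidx !nth_iota ?sx1.
- move=> x y z _ _ _ [x1 [y1 [cx1 _ ex1 ey1 [idx1 c1]]]] [y2 [z2 [_ cz2 ey2 ez2 [idx2 c2]]]].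
  have hy12 : cay_equiv y1 y2 by rewrite /cay_equiv ey1 ey2.
  have sy12 := equiv_size hy12.
  case: (c1) => a1 a2 a3 _; case: (c2) => b1 b2 b3 _.
  have hall2 : all (fun i => i < size idx1) idx2.
    by apply/allP => v hv; rewrite a1 sy12 (allP b3 v hv).
  set idx := map (nth 0 idx1) idx2.
  have hso : sorted ltn idx by apply: comp_sorted.
  have hall : all (fun i => i < size x1) idx.
    apply/allP => v /mapP [u hu ->]; apply: (allP a3); apply: mem_nth.
    exact: (allP hall2 u hu).
  set w := map (nth 0 x1) idx.
  have cw := cont_sub hso hall.
  have cz : cont x1 (compress w) idx.
    apply: (cont_iso cw); first exact: size_compress.
    exact: compress_iso.
  exists x1, (compress w); split => //; first exact: compress_cay.
    rewrite /cay_equiv -ez2; apply: L3.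
      by rewrite size_compress /w !size_map b1.
    move=> s t; rewrite /= size_compress /w !size_map => hs ht.
    have hs2 : s < size z2 by rewrite -b1.
    have ht2 : t < size z2 by rewrite -b1.
    rewrite (contR cz) ?size_compress /w ?size_map // (contR c2) //.
    have hs1 : nth 0 idx2 s < size y1 by rewrite sy12 (allP b3) // mem_nth.
    have ht1 : nth 0 idx2 t < size y1 by rewrite sy12 (allP b3) // mem_nth.
    rewrite -(L2 hy12) // (contR c1) //.
    by rewrite /idx !(nth_map 0).
  by exists idx.
Qed.
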